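(* Let $0<\beta\le\alpha$, let $\hat A=(\hat a[i_1],\dots,\hat a[i_m])$ be an $\alpha$-RS, and let $\theta>0$ satisfy $\hat a[i_1]\le\theta$. Let $i_v$ be the largest index in $\{i_1,\dots,i_m\}$ with $\hat a[i_v]\le\theta$. For an integer $\kappa$ let $H(\kappa)$ denote the largest index $i_u$ with $\hat a[i_u]\le(1+\beta)^{\kappa}$, when such an index exists. Then either $i_v=H(\lceil\log_{1+\beta}\theta\rceil)$ or $i_v=H(\lfloor\log_{1+\beta}\theta\rfloor)$ (the latter being defined in that case).
   Context: An $\alpha$-representative sequence ($\alpha$-RS), for $\alpha\ge 0$, is a finite sequence $\hat A=(\hat a[i_1],\hat a[i_2],\dots,\hat a[i_m])$ of real numbers with associated integer indices $0\le i_1<i_2<\dots<i_m$ such that $\hat a[i_1]\ge 0$ and $\hat a[i_{v+1}]\ge(1+\alpha)\hat a[i_v]$ for all $v\in[1,m-1]$. *)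

(* Defs.v *)
From Stdlib Require Import Reals Lra Lia ZArith.
Open Scope R_scope.

(* floor and ceiling of a real number. [up x] is the unique integer with
   x < up x <= x + 1, so [up x - 1] is the floor. *)
Definition floorZ (x : R) : Z := (up x - 1)%Z.
Definition ceilZ (x : R) : Z := (- floorZ (- x))%Z.

Definition logb (b x : R) : R := ln x / ln b.

(* A finite sequence with m entries: positions v = 0..m-1 (the paper's
   v = 1..m), integer indices idx v, and values a (idx v) = \hat a[i_{v+1}]. *)
Definition is_alpha_RS (alpha : R) (m : nat) (idx : nat -> nat) (a : nat -> R)
  : Prop :=
  (1 <= m)%nat /\
  (forall v, (v + 1 < m)%nat -> (idx v < idx (v + 1))%nat) /\
  0 <= a (idx 0%nat) /\
  (forall v, (v + 1 < m)%nat -> a (idx (v + 1)%nat) >= (1 + alpha) * a (idx v)).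

Definition largest_le (m : nat) (idx : nat -> nat) (a : nat -> R) (t : R)
  (j : nat) : Prop :=
  exists u, (u < m)%nat /\ j = idx u /\ a (idx u) <= t /\
    (forall w, (w < m)%nat -> a (idx w) <= t -> (idx w <= j)%nat).

Definition H_is (beta : R) (m : nat) (idx : nat -> nat) (a : nat -> R)
  (kappa : Z) (j : nat) : Prop :=
  largest_le m idx a (powerRZ (1 + beta) kappa) j.

(* Main.v *)
Require Import Defs.
From Stdlib Require Import Reals ZArith Lra Lia.
Open Scope R_scope.

Lemma rs_nonneg alpha m idx a : 0 <= alpha -> is_alpha_RS alpha m idx a ->
  forall w, (w < m)%nat -> 0 <= a (idx w).
Proof.
  intros Ha [H1 [H2 [H3 H4]]]. induction w; intros Hw; auto.
  replace (S w) with (w + 1)%nat by lia.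
  assert (0 <= a (idx w)) by (apply IHw; lia).
  specialize (H4 w ltac:(lia)). nra.
Qed.

Lemma rs_mono alpha m idx a : 0 <= alpha -> is_alpha_RS alpha m idx a ->
  forall k v, (v + k < m)%nat -> a (idx v) <= a (idx (v + k)%nat).
Proof.
  intros Ha HR. pose proof (rs_nonneg _ _ _ _ Ha HR) as Hn.
  destruct HR as [H1 [H2 [H3 H4]]]. induction k; intros v Hv.
  - rewrite Nat.add_0_r; lra.
  - specialize (IHk v ltac:(lia)).
    replace (v + S k)%nat with ((v + k) + 1)%nat by lia.
    specialize (H4 (v+k)%nat ltac:(lia)). specialize (Hn (v+k)%nat ltac:(lia)). nra.
Qed.

Lemma idx_mono alpha m idx a : is_alpha_RS alpha m idx a ->
  forall k v, (v + k < m)%nat -> (idx v <= idx (v + k))%nat.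
Proof.
  intros [H1 [H2 _]]. induction k; intros v Hv.
  - rewrite Nat.add_0_r; lia.
  - specialize (IHk v ltac:(lia)).
    replace (v + S k)%nat with ((v + k) + 1)%nat by lia.
    specialize (H2 (v+k)%nat ltac:(lia)). lia.
Qed.

Theorem lemma3 (alpha beta theta : R) (m : nat) (idx : nat -> nat)
  (a : nat -> R) (iv : nat) :
  0 < beta -> beta <= alpha ->
  is_alpha_RS alpha m idx a ->
  0 < theta -> a (idx 0%nat) <= theta ->
  largest_le m idx a theta iv ->
  H_is beta m idx a (ceilZ (logb (1 + beta) theta)) iv \/
  H_is beta m idx a (floorZ (logb (1 + beta) theta)) iv.
Proof.
  intros Hb Hba HR Ht Ha0 [v [Hv [-> [Hav Hmax]]]].
  unfold H_is.
  set (b := 1 + beta). set (L := logb b theta).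
  set (c := ceilZ L). set (f := floorZ L).
  assert (Hb1 : 1 < b) by (unfold b; lra).
  assert (Hlnb : 0 < ln b) by (rewrite <- ln_1; apply ln_increasing; lra).
  assert (HRp : Rpower b L = theta).
  { unfold Rpower, L, logb. replace (ln theta / ln b * ln b) with (ln theta)
      by (field; lra). apply exp_ln; auto. }
  assert (Hfl : IZR f <= L < IZR f + 1).
  { unfold f, floorZ. destruct (archimed L). rewrite minus_IZR. simpl. lra. }
  assert (Hce : L <= IZR c < L + 1).
  { unfold c, ceilZ, floorZ. destruct (archimed (-L)). rewrite opp_IZR, minus_IZR.
    simpl. lra. }
  assert (Hcf : (c <= f + 1)%Z).
  { assert (IZR c < IZR (f + 2)) by (rewrite plus_IZR; lra). apply lt_IZR in H.
    lia. }
  assert (Hc : theta <= powerRZ b c).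
  { rewrite powerRZ_Rpower by lra. rewrite <- HRp. apply Rle_Rpower; lra. }
  assert (Hf : powerRZ b f <= theta).
  { rewrite powerRZ_Rpower by lra. rewrite <- HRp. apply Rle_Rpower; lra. }
  assert (Ha : 0 <= alpha) by lra.
  destruct (Classical_Prop.classic ((v + 1 < m)%nat /\ a (idx (v+1)%nat) <= powerRZ b c))
    as [[Hv1 Hle] | Hn].
  - right. exists v. repeat split; auto.
    + assert (Hcm : powerRZ b c = powerRZ b (c - 1) * b).
      { replace c with ((c - 1) + 1)%Z at 1 by lia. rewrite powerRZ_add by lra.
        simpl. ring. }
      assert (Hpm : powerRZ b (c - 1) <= powerRZ b f).
      { rewrite !powerRZ_Rpower by lra. apply Rle_Rpower; try lra.
        apply IZR_le; lia. }
      assert (0 <= a (idx v)) by (eapply rs_nonneg; eauto).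
      destruct HR as [_ [_ [_ H4]]]. specialize (H4 v Hv1).
      assert (b * a (idx v) <= b * powerRZ b f).
      { unfold b in *. nra. }
      nra.
    + intros w Hw Haw. apply Hmax; auto; lra.
  - left. exists v. repeat split; auto; try lra.
    intros w Hw Haw. destruct (le_lt_dec w v).
    + replace v with (w + (v - w))%nat by lia. eapply idx_mono; eauto; lia.
    + exfalso. apply Hn. split; [lia|].
      replace w with ((v + 1) + (w - (v+1)))%nat in Haw by lia.
      pose proof (rs_mono _ _ _ _ Ha HR (w - (v+1)) (v+1) ltac:(lia)). lra.
Qed.
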